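(* Let $\mathbf{Y}\in\mathbb{R}_{\ge0}^{n\times m}$, $\mathbf{u}\in\mathbb{R}^n$, $\mathbf{X}\in\mathbb{R}_{>0}^{p\times m}$ and $\boldsymbol{\beta}\in\mathbb{R}_{>0}^p$. Consider $F(\mathbf{X}):=\tfrac12\|\mathbf{u}-\mathbf{Y}\mathbf{X}^\intercal\boldsymbol{\beta}\|^2$ as a function of $\mathbf{X}$ ($\boldsymbol{\beta}$ fixed) and $G(\boldsymbol{\beta}):=\tfrac12\|\mathbf{u}-\mathbf{Y}\mathbf{X}^\intercal\boldsymbol{\beta}\|^2$ as a function of $\boldsymbol{\beta}$ ($\mathbf{X}$ fixed). Then $$Q_F(\mathbf{X},\mathbf{A}):=\frac12\sum_{i=1}^n\frac{1}{(\mathbf{Y}\mathbf{A}^\intercal\boldsymbol{\beta})_i}\sum_{j=1}^m\sum_{k=1}^pY_{ij}A_{kj}\beta_k\Big(u_i-\frac{X_{kj}}{A_{kj}}(\mathbf{Y}\mathbf{A}^\intercal\boldsymbol{\beta})_i\Big)^2,$$ $$Q_G(\boldsymbol{\beta},\mathbf{a}):=\frac12\sum_{i=1}^n\frac{1}{(\mathbf{Y}\mathbf{X}^\intercal\mathbf{a})_i}\sum_{k=1}^p(\mathbf{Y}\mathbf{X}^\intercal)_{ik}a_k\Big(u_i-\frac{\beta_k}{a_k}(\mathbf{Y}\mathbf{X}^\intercal\mathbf{a})_i\Big)^2$$ define separable and convex surrogate functionals for $F$ and $G$, respectively.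
   Context: The auxiliary arguments $\mathbf{A}\in\mathbb{R}_{>0}^{p\times m}$ and $\mathbf{a}\in\mathbb{R}_{>0}^p$ have strictly positive entries, and all denominators are assumed nonzero. A map $Q_F$ is a surrogate functional for $F$ if $Q_F(\mathbf{x},\mathbf{a})\ge F(\mathbf{x})$ for all $\mathbf{x},\mathbf{a}$ and $Q_F(\mathbf{x},\mathbf{x})=F(\mathbf{x})$ for all $\mathbf{x}$. A surrogate is separable if $Q_F(\mathbf{x},\mathbf{a})=\sum_i g_i(x_i,\mathbf{a})$ for some functions $g_i$ (matrix entries playing the role of coordinates). Convexity refers to the first argument. *)

(* Defs.v *)
From HB Require Import structures.
From mathcomp Require Import all_boot all_order all_algebra.
Set Implicit Arguments. Unset Strict Implicit. Unset Printing Implicit Defensive.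
Import Order.TTheory GRing.Theory Num.Theory.
Local Open Scope ring_scope.

Section Defs.
Variable R : realFieldType.

Definition posmx (a b : nat) (M : 'M[R]_(a, b)) : Prop := forall i j, 0 < M i j.
Definition nnegmx (a b : nat) (M : 'M[R]_(a, b)) : Prop := forall i j, 0 <= M i j.

Definition lsq (n m p : nat) (u : 'cV[R]_n) (Y : 'M[R]_(n, m))
    (X : 'M[R]_(p, m)) (beta : 'cV[R]_p) : R :=
  2^-1 * \sum_(i < n) (u i 0 - (Y *m X^T *m beta) i 0) ^+ 2.

Definition QF (n m p : nat) (u : 'cV[R]_n) (Y : 'M[R]_(n, m)) (beta : 'cV[R]_p)
    (X A : 'M[R]_(p, m)) : R :=
  2^-1 * \sum_(i < n) ((Y *m A^T *m beta) i 0)^-1 *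
    \sum_(j < m) \sum_(k < p)
      Y i j * A k j * beta k 0 *
      (u i 0 - X k j / A k j * (Y *m A^T *m beta) i 0) ^+ 2.

Definition QG (n m p : nat) (u : 'cV[R]_n) (Y : 'M[R]_(n, m)) (X : 'M[R]_(p, m))
    (b a : 'cV[R]_p) : R :=
  2^-1 * \sum_(i < n) ((Y *m X^T *m a) i 0)^-1 *
    \sum_(k < p)
      (Y *m X^T) i k * a k 0 *
      (u i 0 - b k 0 / a k 0 * (Y *m X^T *m a) i 0) ^+ 2.

Definition surrogate (T : Type) (D : T -> Prop) (F : T -> R) (Q : T -> T -> R)
  : Prop :=
  (forall x a, D x -> D a -> F x <= Q x a) /\ (forall x, D x -> Q x x = F x).

Definition separable (a b : nat) (D : 'M[R]_(a, b) -> Prop)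
    (Q : 'M[R]_(a, b) -> 'M[R]_(a, b) -> R) : Prop :=
  exists g : 'I_a -> 'I_b -> R -> 'M[R]_(a, b) -> R,
    forall x y, D x -> D y -> Q x y = \sum_(k < a) \sum_(j < b) g k j (x k j) y.

Definition convex_first (a b : nat) (D : 'M[R]_(a, b) -> Prop)
    (Q : 'M[R]_(a, b) -> 'M[R]_(a, b) -> R) : Prop :=
  forall x1 x2 y t, D x1 -> D x2 -> D y -> 0 <= t -> t <= 1 ->
    Q (t *: x1 + (1 - t) *: x2) y <= t * Q x1 y + (1 - t) * Q x2 y.

End Defs.

(* Main.v *)
Require Import Defs.
From HB Require Import structures.
From mathcomp Require Import all_boot all_order all_algebra.
From mathcomp Require Import ring lra.
Import Order.TTheory GRing.Theory Num.Theory.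
Local Open Scope ring_scope.

Section H.
Variable R : realFieldType.

Lemma jensen (I : finType) (c z : I -> R) :
  (forall l, 0 <= c l) -> 0 < \sum_l c l ->
  (\sum_l c l * z l) ^+ 2 <= (\sum_l c l) * \sum_l c l * z l ^+ 2.
Proof.
move=> c0 S0.
set S := \sum_l c l; set P := \sum_l c l * z l; set Q := \sum_l c l * z l ^+ 2.
have E : \sum_l c l * (S * z l - P) ^+ 2 = S * (S * Q - P ^+ 2).
  rewrite (eq_bigr (fun l => S ^+ 2 * (c l * z l ^+ 2) - (2 * S * P) * (c l * z l) + P ^+ 2 * c l)); last first.
    by move=> l _; ring.
  rewrite big_split /= sumrB -!mulr_sumr -/S -/P -/Q; ring.
have : 0 <= S * (S * Q - P ^+ 2).
  by rewrite -E; apply: sumr_ge0 => l _; apply: mulr_ge0 => //; apply: sqr_ge0.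
by rewrite pmulr_rge0 // subr_ge0.
Qed.

Lemma core (I : finType) (w x a : I -> R) (u : R) :
  (forall l, 0 <= w l) -> (forall l, 0 < a l) -> 0 < \sum_l w l * a l ->
  (u - \sum_l w l * x l) ^+ 2 <=
  (\sum_l w l * a l)^-1 * \sum_l w l * a l * (u - x l / a l * \sum_l w l * a l) ^+ 2.
Proof.
move=> w0 a0 d0; set d := \sum_l w l * a l.
have P : \sum_l w l * a l * (u - x l / a l * d) = d * (u - \sum_l w l * x l).
  rewrite (eq_bigr (fun l => u * (w l * a l) - d * (w l * x l))); last first.
    move=> l _; have := a0 l; rewrite lt0r => /andP[an _]; by field.
  by rewrite sumrB -!mulr_sumr -/d mulrBr mulrC.
have J := @jensen I (fun l => w l * a l) (fun l => u - x l / a l * d) (fun l => mulr_ge0 (w0 l) (ltW (a0 l))) d0.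
rewrite /= P -/d exprMn in J.
rewrite ler_pdivlMl // -(ler_pM2l d0) mulrA -expr2.
exact: J.
Qed.

Lemma core_eq (I : finType) (w a : I -> R) (u : R) :
  (forall l, 0 < a l) -> 0 < \sum_l w l * a l ->
  (\sum_l w l * a l)^-1 * \sum_l w l * a l * (u - a l / a l * \sum_l w l * a l) ^+ 2
  = (u - \sum_l w l * a l) ^+ 2.
Proof.
move=> a0 d0; set d := \sum_l w l * a l.
rewrite (eq_bigr (fun l => (u - d) ^+ 2 * (w l * a l))); last first.
  move=> l _; have := a0 l; rewrite lt0r => /andP[an _]; rewrite divff //; ring.
rewrite -mulr_sumr -/d mulrA mulrC mulrA mulfV ?mul1r //.
by rewrite gt_eqF.
Qed.

Lemma sq_convex (al y1 y2 t : R) : 0 <= t -> t <= 1 ->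
  (al - (t * y1 + (1 - t) * y2)) ^+ 2 <= t * (al - y1) ^+ 2 + (1 - t) * (al - y2) ^+ 2.
Proof.
move=> t0 t1; rewrite -subr_ge0.
have -> : t * (al - y1) ^+ 2 + (1 - t) * (al - y2) ^+ 2 - (al - (t * y1 + (1 - t) * y2)) ^+ 2
  = t * (1 - t) * (y1 - y2) ^+ 2 by ring.
by apply: mulr_ge0; [apply: mulr_ge0; rewrite ?subr_ge0 | apply: sqr_ge0].
Qed.

Lemma convex_sum (I : finType) (f g h : I -> R) t :
  (forall i, f i <= t * g i + (1 - t) * h i) ->
  \sum_i f i <= t * \sum_i g i + (1 - t) * \sum_i h i.
Proof.
move=> H; rewrite !mulr_sumr -big_split /=; exact: ler_sum.
Qed.

Lemma convex_scale (c a b e t : R) : 0 <= c -> a <= t * b + (1 - t) * e ->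
  c * a <= t * (c * b) + (1 - t) * (c * e).
Proof.
move=> c0 H; have -> : t * (c * b) + (1 - t) * (c * e) = c * (t * b + (1 - t) * e) by ring.
exact: ler_wpM2l.
Qed.
End H.

Theorem theorem6 (R : realFieldType) (n m p : nat)
    (Y : 'M[R]_(n, m)) (u : 'cV[R]_n) (X : 'M[R]_(p, m)) (beta : 'cV[R]_p)
    (hY : nnegmx Y) (hX : posmx X) (hbeta : posmx beta)
    (hdenF : forall A : 'M[R]_(p, m), posmx A ->
               forall i : 'I_n, (Y *m A^T *m beta) i 0 != 0)
    (hdenG : forall a : 'cV[R]_p, posmx a ->
               forall i : 'I_n, (Y *m X^T *m a) i 0 != 0) :
  (surrogate (@posmx R p m) (fun X' => lsq u Y X' beta) (QF u Y beta)
   /\ separable (@posmx R p m) (QF u Y beta)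
   /\ convex_first (@posmx R p m) (QF u Y beta))
  /\
  (surrogate (@posmx R p 1) (fun b => lsq u Y X b) (QG u Y X)
   /\ separable (@posmx R p 1) (QG u Y X)
   /\ convex_first (@posmx R p 1) (QG u Y X)).
Proof.
have dFE : forall (A : 'M[R]_(p, m)) i, (Y *m A^T *m beta) i 0 =
    \sum_(l : 'I_m * 'I_p) (Y i l.1 * beta l.2 0) * A l.2 l.1.
  move=> A i; rewrite mxE (eq_bigr (fun k => \sum_j Y i j * A k j * beta k 0)); last first.
    by move=> k _; rewrite mxE mulr_suml; apply: eq_bigr => j _; rewrite mxE.
  by rewrite exchange_big pair_big /=; apply: eq_bigr => l _; ring.
have QFE : forall x A : 'M[R]_(p, m), QF u Y beta x A = 2^-1 * \sum_i
    (\sum_(l : 'I_m * 'I_p) (Y i l.1 * beta l.2 0) * A l.2 l.1)^-1 *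
    \sum_(l : 'I_m * 'I_p) (Y i l.1 * beta l.2 0) * A l.2 l.1 *
      (u i 0 - x l.2 l.1 / A l.2 l.1 *
        \sum_(l : 'I_m * 'I_p) (Y i l.1 * beta l.2 0) * A l.2 l.1) ^+ 2.
  move=> x A; rewrite /QF; congr (_ * _); apply: eq_bigr => i _.
  rewrite !dFE pair_big /=; congr (_ * _); apply: eq_bigr => l _; ring.
have wF0 : forall i (l : 'I_m * 'I_p), 0 <= Y i l.1 * beta l.2 0.
  by move=> i l; apply: mulr_ge0 => //; apply: ltW.
have dF0 : forall A : 'M[R]_(p, m), posmx A -> forall i,
    0 < \sum_(l : 'I_m * 'I_p) (Y i l.1 * beta l.2 0) * A l.2 l.1.
  move=> A hA i; rewrite lt0r -dFE hdenF //= dFE.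
  by apply: sumr_ge0 => l _; apply: mulr_ge0 => //; apply: ltW.
pose gF := fun (k : 'I_p) (j : 'I_m) (s : R) (A : 'M[R]_(p, m)) =>
  2^-1 * \sum_i (\sum_(l : 'I_m * 'I_p) (Y i l.1 * beta l.2 0) * A l.2 l.1)^-1 *
    ((Y i j * beta k 0) * A k j *
      (u i 0 - s / A k j * \sum_(l : 'I_m * 'I_p) (Y i l.1 * beta l.2 0) * A l.2 l.1) ^+ 2).
have sepF : forall x A : 'M[R]_(p, m), QF u Y beta x A = \sum_k \sum_j gF k j (x k j) A.
  move=> x A; rewrite QFE /gF.
  under eq_bigr do rewrite mulr_sumr.
  rewrite exchange_big /= [RHS]exchange_big [RHS]pair_big /= mulr_sumr.
  by apply: eq_bigr => l _.
have wG0 : forall i k, 0 <= (Y *m X^T) i k.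
  move=> i k; rewrite mxE; apply: sumr_ge0 => j _; rewrite mxE.
  by apply: mulr_ge0 => //; apply: ltW.
have dGE : forall (a : 'cV[R]_p) i, (Y *m X^T *m a) i 0 =
    \sum_k (Y *m X^T) i k * a k 0 by move=> a i; rewrite [LHS]mxE.
have dG0 : forall a : 'cV[R]_p, posmx a -> forall i,
    0 < \sum_k (Y *m X^T) i k * a k 0.
  move=> a ha i; rewrite lt0r -dGE hdenG //= dGE.
  by apply: sumr_ge0 => l _; apply: mulr_ge0 => //; apply: ltW.
have QGE : forall b a : 'cV[R]_p, QG u Y X b a = 2^-1 * \sum_i
    (\sum_k (Y *m X^T) i k * a k 0)^-1 *
    \sum_k (Y *m X^T) i k * a k 0 *
      (u i 0 - b k 0 / a k 0 * \sum_k (Y *m X^T) i k * a k 0) ^+ 2.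
  by move=> b a; rewrite /QG; congr (_ * _); apply: eq_bigr => i _; rewrite dGE.
pose gG := fun (k : 'I_p) (j : 'I_1) (s : R) (a : 'cV[R]_p) =>
  2^-1 * \sum_i (\sum_k (Y *m X^T) i k * a k 0)^-1 *
    ((Y *m X^T) i k * a k 0 *
      (u i 0 - s / a k 0 * \sum_k (Y *m X^T) i k * a k 0) ^+ 2).
have sepG : forall b a : 'cV[R]_p, QG u Y X b a = \sum_k \sum_j gG k j (b k j) a.
  move=> b a; rewrite QGE /gG.
  under eq_bigr do rewrite mulr_sumr.
  rewrite exchange_big /= mulr_sumr; apply: eq_bigr => k _.
  by rewrite big_ord1.
have h2 : 0 <= 2^-1 :> R by rewrite invr_ge0 ler0n.
split; [split; [split | split] | split; [split | split]].
- move=> x A hx hA; rewrite /lsq QFE; apply: ler_wpM2l => //.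
  apply: ler_sum => i _; rewrite dFE.
  exact: (@core R _ (fun l => Y i l.1 * beta l.2 0) (fun l => x l.2 l.1)
     (fun l => A l.2 l.1) (u i 0) (wF0 i) (fun l => hA _ _) (dF0 A hA i)).
- move=> x hx; rewrite /lsq QFE; congr (_ * _); apply: eq_bigr => i _; rewrite dFE.
  exact: (@core_eq R _ (fun l => Y i l.1 * beta l.2 0)
     (fun l => x l.2 l.1) (u i 0) (fun l => hx _ _) (dF0 x hx i)).
- by exists gF => x y _ _; exact: sepF.
- move=> x1 x2 y t h1 h2' hy t0 t1; rewrite !sepF.
  apply: convex_sum => k; apply: convex_sum => j; rewrite /gF !mxE.
  apply: convex_scale => //; apply: convex_sum => i.
  apply: convex_scale; first by rewrite invr_ge0 ltW // dF0.
  apply: convex_scale; first by apply: mulr_ge0; [exact: (wF0 i (j, k)) | apply: ltW].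
  set d := \sum_l _.
  rewrite (_ : (t * x1 k j + (1 - t) * x2 k j) / y k j * d =
     t * (x1 k j / y k j * d) + (1 - t) * (x2 k j / y k j * d)); last by ring.
  exact: sq_convex.
- move=> b a hb ha; rewrite /lsq QGE; apply: ler_wpM2l => //.
  apply: ler_sum => i _; rewrite dGE.
  exact: (@core R _ (fun k => (Y *m X^T) i k) (fun k => b k 0)
     (fun k => a k 0) (u i 0) (wG0 i) (fun k => ha _ _) (dG0 a ha i)).
- move=> b hb; rewrite /lsq QGE; congr (_ * _); apply: eq_bigr => i _; rewrite dGE.
  exact: (@core_eq R _ (fun k => (Y *m X^T) i k)
     (fun k => b k 0) (u i 0) (fun k => hb _ _) (dG0 b hb i)).
- by exists gG => x y _ _; exact: sepG.
- move=> x1 x2 y t h1 h2' hy t0 t1; rewrite !sepG.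
  apply: convex_sum => k; apply: convex_sum => j; rewrite /gG.
  rewrite !mxE.
  apply: convex_scale => //; apply: convex_sum => i.
  apply: convex_scale; first by rewrite invr_ge0 ltW // dG0.
  apply: convex_scale; first by apply: mulr_ge0; [exact: wG0 | apply: ltW].
  set d := \sum_l _.
  rewrite (_ : (t * x1 k j + (1 - t) * x2 k j) / y k 0 * d =
     t * (x1 k j / y k 0 * d) + (1 - t) * (x2 k j / y k 0 * d)); last by ring.
  exact: sq_convex.
Qed.
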